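(* Let $H$, $G$, $R$ be finite simple connected graphs such that $H$ is an induced subgraph of $G$ and $G$ is an induced subgraph of $R$, with $\mathrm{diam}(H)=\mathrm{diam}(G)=2$. If $\beta(R)=n(R)-t$ and $\beta(H)=n(H)-t$ for some positive integer $t$, then $\beta(G)=n(G)-t$.
   Context: $n(X)$ denotes the number of vertices of a graph $X$. For an ordered set $W=\{w_1,\dots,w_k\}$ of vertices of a connected graph $X$, $r(v|W)=(d_X(v,w_1),\dots,d_X(v,w_k))$ with $d_X$ the shortest-path distance; $W$ is a resolving set if distinct vertices have distinct vectors $r(\cdot|W)$, and $\beta(X)$, the metric dimension, is the minimum size of a resolving set. *)

(* Defs.v *)
From mathcomp Require Import all_boot.
Set Implicit Arguments. Unset Strict Implicit. Unset Printing Implicit Defensive.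

Section Graphs.
Variable V : finType.
Variable e : rel V.

Definition simple_graph := symmetric e /\ irreflexive e.

Definition connected_graph := forall x y : V, connect e x y.

Definition walk_of_length (n : nat) (x y : V) : bool :=
  [exists p : n.-tuple V, path e x p && (last x p == y)].

(* shortest-path distance: least n with a walk of length n from x to y
   (in a connected graph such n exists and is < #|V|; otherwise #|V|) *)
Definition gdist (x y : V) : nat :=
  find (fun n => walk_of_length n x y) (iota 0 #|V|).

Definition diam : nat := \max_(x : V) \max_(y : V) gdist x y.

Definition resolvingb (W : {set V}) : bool :=
  [forall u, forall v, [forall w in W, gdist u w == gdist v w] ==> (u == v)].

Definition metric_dim : nat :=
  #|[arg min_(W < [set: V] | resolvingb W) #|W|]|.

End Graphs.

Definition induced_embedding (VH VG : finType) (eH : rel VH) (eG : rel VG)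
  (f : VH -> VG) : Prop :=
  injective f /\ forall x y, eG (f x) (f y) = eH x y.

(* Main.v *)
Require Import Defs.
From mathcomp Require Import all_boot.
From mathcomp Require Import zify.
Set Implicit Arguments. Unset Strict Implicit.
Section G.
Variables (V : finType) (e : rel V) (cV : connected_graph e).

Lemma walk0 x y : walk_of_length e 0 x y = (x == y).
Proof.
apply/existsP/idP => [[p /andP[_ /eqP <-]]|/eqP <-].
  by case: p => [[|]].
by exists [tuple]; rewrite /= eqxx.
Qed.

Lemma walk1 x y : walk_of_length e 1 x y = e x y.
Proof.
apply/existsP/idP => [[p]|exy].
  by case: p => [[|z [|]]] //= _ /andP[/andP[exz _] /eqP <-].
by exists [tuple y]; rewrite /= exy eqxx.
Qed.

Lemma conn_walk x y : exists2 n, n < #|V| & walk_of_length e n x y.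
Proof.
have /connectP[p pp ->] := cV x y.
case: (shortenP pp) => p' pp' up' _.
exists (size p').
  have := max_card (mem (x :: p')).
  by rewrite (card_uniqP up') /=.
by apply/existsP; exists (in_tuple p'); rewrite /= pp' eqxx.
Qed.

Lemma gdist_lt x y : gdist e x y < #|V|.
Proof.
case: (conn_walk x y) => n ltn w.
have : has (fun n => walk_of_length e n x y) (iota 0 #|V|).
  by apply/hasP; exists n => //; rewrite mem_iota.
by rewrite has_find size_iota.
Qed.

Lemma gdist_walk x y : walk_of_length e (gdist e x y) x y.
Proof.
case: (conn_walk x y) => n ltn w.
have H : has (fun n => walk_of_length e n x y) (iota 0 #|V|).
  by apply/hasP; exists n => //; rewrite mem_iota.
have := nth_find 0 H.
by rewrite nth_iota ?add0n //; move: H; rewrite has_find size_iota.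
Qed.

Lemma gdist_le n x y : walk_of_length e n x y -> gdist e x y <= n.
Proof.
move=> w; case: (ltnP n #|V|) => hn; last first.
  exact: (leq_trans (ltnW (gdist_lt x y)) hn).
rewrite leqNgt; apply/negP => lt.
have := before_find 0 lt.
by rewrite nth_iota // add0n w.
Qed.

Lemma gdist0 x y : gdist e x y = 0 -> x = y.
Proof. by move=> h; have := gdist_walk x y; rewrite h walk0 => /eqP. Qed.

Lemma gdist_xx x : gdist e x x = 0.
Proof. by apply/eqP; rewrite -leqn0; apply: gdist_le; rewrite walk0. Qed.

End G.
Lemma walk_map (VH VG : finType) (eH : rel VH) (eG : rel VG) f n x y :
  induced_embedding eH eG f -> walk_of_length eH n x y ->
  walk_of_length eG n (f x) (f y).
Proof.
move=> [_ hf] /existsP[p /andP[pp /eqP <-]].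
apply/existsP; exists (map_tuple f p); rewrite /= path_map last_map eqxx andbT.
by rewrite (@eq_path _ _ eH) // => a b; rewrite /relpre hf.
Qed.

Lemma dist_emb (VH VG : finType) (eH : rel VH) (eG : rel VG) f x y :
  connected_graph eH -> connected_graph eG ->
  induced_embedding eH eG f -> diam eH <= 2 ->
  gdist eG (f x) (f y) = gdist eH x y.
Proof.
move=> cH cG hf dH.
have k2 : gdist eH x y <= 2.
  apply: leq_trans dH; apply: leq_trans (leq_bigmax x).
  exact: (leq_bigmax (F := fun y => gdist eH x y) y).
apply/eqP; rewrite eqn_leq; apply/andP; split.
  apply: (gdist_le cG); apply: (walk_map hf). exact: (gdist_walk cH).
have w := gdist_walk cG (f x) (f y).
move: w; case E: (gdist eG (f x) (f y)) => [|[|m]] w.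
- rewrite walk0 in w; have -> : x = y by apply: hf.1; apply/eqP.
  by rewrite leqn0; apply/eqP; apply: gdist_xx.
- rewrite walk1 hf.2 in w; apply: gdist_le => //; by rewrite walk1.
- by apply: leq_trans k2 _.
Qed.

Lemma key (VH VG : finType) (eH : rel VH) (eG : rel VG) f :
  connected_graph eH -> connected_graph eG ->
  induced_embedding eH eG f -> diam eH <= 2 ->
  metric_dim eG + #|VH| <= #|VG| + metric_dim eH.
Proof.
move=> cH cG hf dH.
have resT (V : finType) (e : rel V) : connected_graph e -> resolvingb e [set: V].
  move=> c; apply/forallP => u; apply/forallP => v; apply/implyP => /forallP h.
  have := h u; rewrite in_setT /= gdist_xx // eq_sym => /eqP/gdist0 ->//.
rewrite /metric_dim.
case: (arg_minnP (fun W : {set VH} => #|W|) (resT _ _ cH)) => WH rWH minH.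
set W := ~: [set f x | x in ~: WH].
have rW : resolvingb eG W.
  apply/forallP => u; apply/forallP => v; apply/implyP => /forallP h.
  case uW: (u \in W).
    by have := h u; rewrite uW /= gdist_xx // eq_sym => /eqP/gdist0 ->.
  case vW: (v \in W).
    by have := h v; rewrite vW /= gdist_xx // => /eqP/gdist0 ->.
  move: uW vW; rewrite !inE => /negbFE + /negbFE; move=> /imsetP[x _ ?] /imsetP[y _ ?]; subst u v.
  apply/eqP; congr f; apply/eqP.
  move/forallP: rWH => /(_ x) /forallP /(_ y) /implyP; apply.
  apply/forallP => w; apply/implyP => wW.
  have : f w \in W by rewrite inE (mem_imset _ _ hf.1) inE negbK.
  move=> fw; have := h (f w); rewrite fw /=.
  by rewrite !(dist_emb _ _ cH cG hf dH).
case: (arg_minnP (fun W : {set VG} => #|W|) (resT _ _ cG)) => WG _ minG.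
have := minG _ rW.
have := cardsC [set f x | x in ~: WH]; rewrite card_imset; last exact: hf.1.
have := cardsC WH.
rewrite -/W; lia.
Qed.

Theorem corollary2p7
  (VH VG VR : finType) (eH : rel VH) (eG : rel VG) (eR : rel VR)
  (sH : simple_graph eH) (sG : simple_graph eG) (sR : simple_graph eR)
  (cH : connected_graph eH) (cG : connected_graph eG) (cR : connected_graph eR)
  (f : VH -> VG) (g : VG -> VR)
  (hf : induced_embedding eH eG f) (hg : induced_embedding eG eR g)
  (dH : diam eH = 2) (dG : diam eG = 2)
  (t : nat) (ht : 0 < t)
  (bR : metric_dim eR + t = #|VR|) (bH : metric_dim eH + t = #|VH|) :
  metric_dim eG + t = #|VG|.
Proof.
have k1 := key cH cG hf (eq_leq dH).
have k2 := key cG cR hg (eq_leq dG).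
lia.
Qed.
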